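(* Let $G$ be a finite group and let $R(G)$ be its solvable radical. For $g\in G$, we have $g\notin R(G)$ if and only if there exist an integer $n\ge 1$ and elements $x_1,\dots,x_n\in G$ such that the subgroup $\langle [g,x_1],\dots,[g,x_n]\rangle$ is not solvable.
   Context: The commutator is $[x,y]=xyx^{-1}y^{-1}$. The solvable radical $R(G)$ is the largest solvable normal subgroup of $G$. *)

(* Defs.v *)
From mathcomp Require Import all_boot all_fingroup all_solvable.
Set Implicit Arguments. Unset Strict Implicit. Unset Printing Implicit Defensive.
Local Open Scope group_scope.

(* Paper's commutator convention: [x,y] = x y x^-1 y^-1. *)
Definition pcomm (gT : finGroupType) (x y : gT) : gT := x * y * x^-1 * y^-1.

Definition solrad (gT : finGroupType) (G : {set gT}) : {set gT} :=
  <<\bigcup_(H : {group gT} | (H <| G) && solvable H) H>>.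

(* Main.v *)
Require Import Defs.
From mathcomp Require Import all_boot all_fingroup all_solvable.
Set Implicit Arguments. Unset Strict Implicit.
Local Open Scope group_scope.

Lemma solrad_prop (gT : finGroupType) (G : {group gT}) :
  [&& solvable (solrad G), solrad G \subset G & G \subset 'N(solrad G)].
Proof.
rewrite /solrad.
apply: (big_rec (fun X => [&& solvable <<X>>, <<X>> \subset G & G \subset 'N(<<X>>)])).
  by rewrite gen0 solvable1 sub1G norms1.
move=> H X /andP[nHG solH] /and3P[solX sXG nXG].
have sHG := normal_sub nHG; have nHG' := normal_norm nHG.
have E : H <*> <<X>> = H * <<X>>.
  by rewrite norm_joinEl // (subset_trans sHG nXG).
apply/and3P; split.
- rewrite -joingE -joing_idr; have nHM : H <| H <*> <<X>>.
    rewrite /normal joing_subl join_subG normG /=.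
    exact: subset_trans sXG nHG'.
  rewrite (series_sol nHM) solH /=.
  have -> : (H <*> <<X>>) / H = <<X>> / H by rewrite E quotientMidl.
  exact: quotient_sol.
- by rewrite gen_subG subUset sHG -gen_subG.
- by rewrite -joingE -joing_idr norms_gen // normsU // norm_gen.
Qed.

Lemma id1 (gT : finGroupType) (g x y : gT) :
  (pcomm g x) ^ y = (pcomm g y^-1)^-1 * pcomm g (y^-1 * x).
Proof.
rewrite /pcomm /conjg !invMg !invgK !mulgA.
by rewrite mulgKV mulgK.
Qed.

Lemma id2 (gT : finGroupType) (g y : gT) :
  g^-1 * g ^ y = ((pcomm g y^-1)^-1) ^ g.
Proof.
rewrite /pcomm /conjg !invMg !invgK !mulgA.
by rewrite mulgKV.
Qed.

Lemma pcommG (gT : finGroupType) (G : {group gT}) g x :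
  g \in G -> x \in G -> pcomm g x \in G.
Proof. by move=> Gg Gx; rewrite /pcomm !groupM ?groupV. Qed.

Theorem corollary1p13 (gT : finGroupType) (G : {group gT}) (g : gT) :
  g \in G ->
  (g \notin solrad G <->
   exists (n : nat) (x : 'I_n -> gT),
     (1 <= n)%N /\ (forall i, x i \in G) /\
     ~~ solvable <<[set pcomm g (x i) | i : 'I_n]>>).
Proof.
move=> Gg; have /and3P[solR sRG nRG] := solrad_prop G.
split; last first.
  case=> n [x [_ [Gx nsol]]]; apply: contra nsol => Rg.
  apply: (solvableS (G := [group of solrad G])) => //.
  rewrite gen_subG; apply/subsetP => _ /imsetP[i _ ->].
  rewrite /pcomm -mulgA -mulgA; apply: groupM => //.
  have : (g^-1) ^ (x i)^-1 \in solrad G.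
    by rewrite memJ_norm ?groupV // (subsetP nRG) ?groupV.
  by rewrite /conjg invgK !mulgA.
move=> nRg.
pose A := [set pcomm g x | x in G].
pose N := <<A>>.
have sNG : N \subset G.
  by rewrite gen_subG; apply/subsetP => _ /imsetP[x Gx ->]; exact: pcommG.
have nNG : G \subset 'N(N).
  apply/subsetP => y Gy; rewrite inE -genJ gen_subG.
  apply/subsetP => _ /imsetP[_ /imsetP[x Gx ->] ->].
  by rewrite id1 groupM ?groupV // mem_gen // imset_f // ?groupM ?groupV.
exists #|G|, (fun i => enum_val i); split; first exact: cardG_gt0.
split; first by move=> i; exact: enum_valP.
apply: contra nRg => solS.
have solN : solvable N.
  apply: solvableS solS; apply: genS; apply/subsetP => _ /imsetP[x Gx ->].
  by apply/imsetP; exists (enum_rank_in Gx x) => //; rewrite enum_rankK_in.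
have gN : g \in 'N(N) by rewrite (subsetP nNG).
have eqJ : <[g]> <*> N = <[g]> * N by rewrite norm_joinEl // cycle_subG.
have nJG : (<[g]> <*> N)%G <| G.
  rewrite /normal join_subG cycle_subG Gg sNG /=.
  apply/subsetP => y Gy; rewrite inE eqJ conjsMg -cycleJ (normP (subsetP nNG y Gy)).
  rewrite -eqJ mul_subG ?joing_subr // cycle_subG.
  have -> : g ^ y = g * (g^-1 * g ^ y) by rewrite mulKVg.
  rewrite /= eqJ mem_mulg ?cycle_id // id2 memJ_norm // groupV mem_gen //.
  by rewrite imset_f // groupV.
have solJ : solvable (<[g]> <*> N)%G.
  have nNJ : N <| <[g]> <*> N.
    by rewrite /normal joing_subr join_subG cycle_subG gN normG.
  rewrite (series_sol nNJ) solN /=.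
  have -> : (<[g]> <*> N) / N = <[g]> / N by rewrite eqJ quotientMidr.
  exact/quotient_sol/abelian_sol/cycle_abelian.
rewrite /solrad; apply: mem_gen; apply/bigcupP; exists (<[g]> <*> N)%G.
  by rewrite nJG solJ.
by rewrite /= (subsetP (joing_subl _ _)) // cycle_id.
Qed.
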